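(* Let $V$ be a finite set of truth values and $\models_{\mathcal{D}_p,\mathcal{D}_c}$ a mixed consequence truth-relation on $V$ that is not pure ($\mathcal{D}_p\neq\mathcal{D}_c$), with constant expressive semantics. Then it admits regular connectives whose regularity rules are satisfied by no classical connective, and it also admits, for every classical connective, a regular connective sharing a regularity rule with it.
   Context: $V$ contains distinct $1,0$; sets of designated values $\mathcal{D}$ satisfy $1\in\mathcal{D}$, $0\notin\mathcal{D}$; $\gamma\models_{\mathcal{D}_p,\mathcal{D}_c}\delta$ iff ($\gamma\subseteq\mathcal{D}_p\Rightarrow\delta\cap\mathcal{D}_c\neq\emptyset$); pure means $\mathcal{D}_p=\mathcal{D}_c$. Semantics: valuations mapping atoms to $V$, connectives (of any arity, including $0$) interpreted by fixed truth functions, extended compositionally, every assignment to finitely many distinct atoms realized; constant expressive: every value is the constant value of some formula. $\Gamma\vdash\Delta$ iff $v(\Gamma)\models v(\Delta)$ for all $v$. An $n$-ary connective $C$ is regular with rule $(\mathcal{B}^p,\mathcal{B}^c)$, $\mathcal{B}^p,\mathcal{B}^c\subseteq\mathcal{P}(\{1..n\})^2$, if for all $\Gamma,\Delta,F_1..F_n$: $\Gamma\cup\{C(\vec F)\}\vdash\Delta$ iff for all $(B_p,B_c)\in\mathcal{B}^p$, $\Gamma\cup\{F_i:i\in B_p\}\vdash\{F_i:i\in B_c\}\cup\Delta$; $\Gamma\vdash\{C(\vec F)\}\cup\Delta$ iff the same for all $(B_p,B_c)\in\mathcal{B}^c$ (empty conjunction = true). Classical logic: $V=\{0,1\}$ with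 $\models_{\{1\},\{1\}}$; classical connectives: truth functions $\{0,1\}^n\to\{0,1\}$. Connectives share a regularity rule if some $(\mathcal{B}^p,\mathcal{B}^c)$ is satisfied by both. *)

(* Defs.v *)
From mathcomp Require Import all_boot.
Set Implicit Arguments. Unset Strict Implicit. Unset Printing Implicit Defensive.

Record sem (V : Type) := Sem {
  conn : Type;
  arity : conn -> nat;
  interp : forall c : conn, ('I_(arity c) -> V) -> V
}.

Inductive form (C : Type) (ar : C -> nat) : Type :=
| Atom : nat -> form ar
| App : forall c : C, ('I_(ar c) -> form ar) -> form ar.
Arguments Atom {C ar} n.
Arguments App {C ar} c args.

Definition formula V (S : sem V) := form (@arity V S).

Fixpoint eval V (S : sem V) (v : nat -> V) (phi : formula S) {struct phi} : V :=
  match phi with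
  | Atom n => v n
  | App c args => interp (fun i => eval v (args i))
  end.

Definition entails (V : finType) (S : sem V) (Dp Dc : {set V})
    (Gamma Delta : formula S -> Prop) : Prop :=
  forall v : nat -> V,
    (forall g, Gamma g -> eval v g \in Dp) ->
    exists d, Delta d /\ eval v d \in Dc.

Definition const_expressive V (S : sem V) : Prop :=
  forall x : V, exists phi : formula S, forall v, eval v phi = x.

(* A regularity rule (B^p, B^c) for an n-ary connective; indices are 'I_n
   (i.e. {0..n-1} standing for {1..n}). *)
Definition rule (n : nat) : Type :=
  ({set {set 'I_n} * {set 'I_n}} * {set {set 'I_n} * {set 'I_n}})%type.

Definition setU1f A (P : A -> Prop) (a : A) : A -> Prop := fun x => P x \/ x = a.
Definition setUp A (P Q : A -> Prop) : A -> Prop := fun x => P x \/ Q x.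
Definition img_idx A n (F : 'I_n -> A) (B : {set 'I_n}) : A -> Prop :=
  fun x => exists2 i, i \in B & x = F i.

Definition regular (V : finType) (S : sem V) (Dp Dc : {set V})
    (c : conn S) (R : rule (arity c)) : Prop :=
  forall (Gamma Delta : formula S -> Prop) (F : 'I_(arity c) -> formula S),
    (entails Dp Dc (setU1f Gamma (App c F)) Delta <->
      (forall B, B \in R.1 ->
        entails Dp Dc (setUp Gamma (img_idx F B.1)) (setUp (img_idx F B.2) Delta)))
    /\
    (entails Dp Dc Gamma (setU1f Delta (App c F)) <->
      (forall B, B \in R.2 ->
        entails Dp Dc (setUp Gamma (img_idx F B.1)) (setUp (img_idx F B.2) Delta))).

Definition ext_arity V (S : sem V) (n : nat) (o : option (conn S)) : nat :=
  match o with Some c => arity c | None => n end.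

Definition ext_interp V (S : sem V) (n : nat) (f : ('I_n -> V) -> V)
    (o : option (conn S)) : ('I_(@ext_arity V S n o) -> V) -> V :=
  match o as o0 return ('I_(@ext_arity V S n o0) -> V) -> V with
  | Some c => @interp V S c
  | None => f
  end.

Definition ext V (S : sem V) (n : nat) (f : ('I_n -> V) -> V) : sem V :=
  @Sem V (option (conn S)) (@ext_arity V S n) (@ext_interp V S n f).

(* Classical logic: V = {0,1} (bool), designated {1} on both sides, with every
   classical truth function available as a connective. *)
Definition classical_sem : sem bool :=
  @Sem bool {n : nat & ('I_n -> bool) -> bool} (fun c => projT1 c) (fun c => projT2 c).

Definition classical_sat (n : nat) (g : ('I_n -> bool) -> bool) (R : rule n) : Prop :=
  @regular bool classical_sem [set true] [set true]
    (existT (fun n => ('I_n -> bool) -> bool) n g) R.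

(* Main.v *)
Require Import Defs.
From mathcomp Require Import all_boot.
From Stdlib Require Import FunctionalExtensionality.
Set Implicit Arguments. Unset Strict Implicit. Unset Printing Implicit Defensive.

Definition mt (V : finType) (Dp Dc : {set V}) n (x : 'I_n -> V)
  (B : {set 'I_n} * {set 'I_n}) : bool :=
  [forall i, ((i \in B.1) ==> (x i \in Dp)) && ((i \in B.2) ==> (x i \notin Dc))].

Lemma L1 (V : finType) (S : sem V) (Dp Dc : {set V}) (c : conn S) (R : rule (arity c)) :
  (forall x, (@interp V S c x \in Dp) = [exists B in R.1, mt Dp Dc x B]) ->
  (forall x, (@interp V S c x \notin Dc) = [exists B in R.2, mt Dp Dc x B]) ->
  @regular V S Dp Dc c R.
Proof.
move=> HP HC Gamma Delta F.
have evC v : eval v (App c F) = @interp V S c (fun i => eval v (F i)) by [].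
have mk : forall v (B : {set 'I_(arity c)} * {set 'I_(arity c)}),
   (forall i, i \in B.1 -> eval v (F i) \in Dp) ->
   ~~ [exists i in B.2, eval v (F i) \in Dc] -> mt Dp Dc (fun i => eval v (F i)) B.
  move=> v B H1 Hn; apply/forallP => i; apply/andP; split; apply/implyP => Hi.
    exact: H1.
  by apply/negP => Hd; move/negP: Hn; apply; apply/existsP; exists i; rewrite Hi Hd.
split; split.
- move=> H B HB v HG.
  case: (boolP [exists i in B.2, eval v (F i) \in Dc]) => [/existsP [i /andP [Hi Hd]] | Hn].
    by exists (F i); split => //; left; exists i.
  have Hm := mk v B (fun i Hi => HG _ (or_intror (ex_intro2 _ _ i Hi erefl))) Hn.
  have HCp : eval v (App c F) \in Dp.
    by rewrite evC HP; apply/existsP; exists B; rewrite HB Hm.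
  have [d [Hd1 Hd2]] := H v (fun g Hg => match Hg with
      | or_introl h => HG g (or_introl h)
      | or_intror e => eq_ind_r (fun z => eval v z \in Dp) HCp e end).
  by exists d; split => //; right.
- move=> H v HG.
  have : eval v (App c F) \in Dp by apply: HG; right.
  rewrite evC HP => /existsP [B /andP [HB Hm]].
  have HG' : forall g, setUp Gamma (img_idx F B.1) g -> eval v g \in Dp.
    move=> g [Hg|[i Hi ->]]; first by apply: HG; left.
    by move/forallP: Hm => /(_ i) /andP [/implyP /(_ Hi) ->].
  have [d [[[i Hi Ed]|Hd] Hd2]] := H B HB v HG'.
    by move/forallP: Hm => /(_ i) /andP [_ /implyP /(_ Hi)]; rewrite -Ed Hd2.
  by exists d.
- move=> H B HB v HG.
  case: (boolP [exists i in B.2, eval v (F i) \in Dc]) => [/existsP [i /andP [Hi Hd]] | Hn].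
    by exists (F i); split => //; left; exists i.
  have Hm := mk v B (fun i Hi => HG _ (or_intror (ex_intro2 _ _ i Hi erefl))) Hn.
  have HCn : eval v (App c F) \notin Dc.
    by rewrite evC HC; apply/existsP; exists B; rewrite HB Hm.
  have [d [[Hd1|Ed] Hd2]] := H v (fun g Hg => HG g (or_introl Hg)).
    by exists d; split => //; right.
  by move: HCn; rewrite -Ed Hd2.
- move=> H v HG.
  case: (boolP (eval v (App c F) \in Dc)) => HCd.
    by exists (App c F); split => //; right.
  move: HCd; rewrite evC HC => /existsP [B /andP [HB Hm]].
  have HG' : forall g, setUp Gamma (img_idx F B.1) g -> eval v g \in Dp.
    move=> g [Hg|[i Hi ->]]; first by apply: HG.
    by move/forallP: Hm => /(_ i) /andP [/implyP /(_ Hi) ->].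
  have [d [[[i Hi Ed]|Hd] Hd2]] := H B HB v HG'.
    by move/forallP: Hm => /(_ i) /andP [_ /implyP /(_ Hi)]; rewrite -Ed Hd2.
  by exists d; split => //; left.
Qed.

Definition Rg n (g : ('I_n -> bool) -> bool) : rule n :=
  ([set B | (B.2 == ~: B.1) && g (fun i => i \in B.1)],
   [set B | (B.2 == ~: B.1) && ~~ g (fun i => i \in B.1)]).

Lemma set_diff_ex (T : finType) (A B : {set T}) : A != B -> exists i, (i \in A) != (i \in B).
Proof.
move=> H; case: (boolP [exists i, (i \in A) != (i \in B)]) => [/existsP [i Hi]|/existsPn Hn].
  by exists i.
by move/eqP: H; case; apply/setP => i; move: (Hn i); case: (i \in A); case: (i \in B).
Qed.

Lemma combo (V : finType) (one zero : V) (Dp Dc : {set V}) n (g : ('I_n -> bool) -> bool)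
  (x : 'I_n -> V) : one \in Dp -> one \in Dc -> zero \notin Dp -> zero \notin Dc ->
  exists w, ((w \in Dp) == [exists B in (Rg g).1, mt Dp Dc x B]) &&
            ((w \notin Dc) == [exists B in (Rg g).2, mt Dp Dc x B]).
Proof.
move=> hp1 hc1 hp0 hc0.
case: (boolP [exists B in (Rg g).1, mt Dp Dc x B]) => [/existsP [B1 /andP [HB1 Hm1]] | HP];
case: (boolP [exists B in (Rg g).2, mt Dp Dc x B]) => [/existsP [B2 /andP [HB2 Hm2]] | HQ].
- move: HB1 HB2; rewrite /Rg /= !inE => /andP [/eqP E1 G1] /andP [/eqP E2 G2].
  have : B1.1 != B2.1 by apply/negP => /eqP E; move: G2; rewrite -E G1.
  case/set_diff_ex => i; move/forallP: Hm1 => /(_ i); move/forallP: Hm2 => /(_ i).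
  rewrite E1 E2 !inE.
  move=> /andP [h1 h2] /andP [h3 h4].
  case: (i \in B1.1) h3 h4; case: (i \in B2.1) h1 h2 => //= h1 h2 h3 h4 _.
    by exists (x i); rewrite h3 h2.
  by exists (x i); rewrite h1 h4.
- by exists one; rewrite hp1 hc1.
- by exists zero; rewrite (negbTE hp0) hc0.
- case: (boolP [exists i, (x i \notin Dp) && (x i \in Dc)]) => [/existsP [i /andP [h1 h2]] | Hn].
    by exists (x i); rewrite (negbTE h1) h2.
  exfalso.
  pose S := [set i | x i \in Dp].
  have Hm : mt Dp Dc x (S, ~: S).
    apply/forallP => i; rewrite /= !inE; move/existsPn: Hn => /(_ i).
    by case: (x i \in Dp); case: (x i \in Dc).
  case Hg: (g (fun i => i \in S)).
    by move/negP: HP; apply; apply/existsP; exists (S, ~: S); rewrite Hm /Rg /= !inE eqxx Hg.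
  by move/negP: HQ; apply; apply/existsP; exists (S, ~: S); rewrite Hm /Rg /= !inE eqxx Hg.
Qed.

Lemma class_pt n (g : ('I_n -> bool) -> bool) (x : 'I_n -> bool) (b : bool) :
  (g x == b) = [exists B in [set B : {set 'I_n} * {set 'I_n} | (B.2 == ~: B.1) && (g (fun i => i \in B.1) == b)],
                 mt [set true] [set true] x B].
Proof.
apply/idP/idP.
- move=> Hg; apply/existsP; exists ([set i | x i], ~: [set i | x i]).
  have E : (fun i => i \in [set i | x i]) = x by apply: functional_extensionality => i; rewrite inE.
  rewrite inE /= eqxx E Hg /=; apply/forallP => i; rewrite !inE; by case: (x i).
- case/existsP => B /andP []; rewrite inE => /andP [/eqP HB2 Hg] Hm.
  have -> : x = (fun i => i \in B.1); last by [].
  apply: functional_extensionality => i; move/forallP: Hm => /(_ i); rewrite HB2 !inE.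
  by case: (x i); case: (i \in B.1).
Qed.

Lemma class_sat n (g : ('I_n -> bool) -> bool) : classical_sat g (Rg g).
Proof.
apply: L1 => x /=.
- have -> : (g x \in [set true]) = (g x == true) by rewrite inE.
  rewrite class_pt; apply: eq_existsb => B; rewrite !inE.
  by case: (g _).
- have -> : (g x \notin [set true]) = (g x == false) by rewrite inE; case: (g x).
  rewrite class_pt; apply: eq_existsb => B; rewrite !inE.
  by case: (g _).
Qed.

Definition fg (V : finType) (one : V) (Dp Dc : {set V}) n (g : ('I_n -> bool) -> bool)
  (x : 'I_n -> V) : V :=
  odflt one [pick w | ((w \in Dp) == [exists B in (Rg g).1, mt Dp Dc x B]) &&
            ((w \notin Dc) == [exists B in (Rg g).2, mt Dp Dc x B])].


Definition cg (g : ('I_0 -> bool) -> bool) : conn classical_sem :=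
  existT (fun n => ('I_n -> bool) -> bool) 0 g.

Definition F0 (g : ('I_0 -> bool) -> bool) : 'I_(arity (cg g)) -> formula classical_sem :=
  fun _ => Atom 0.

Definition e0 : 'I_0 -> bool := fun _ => true.

Lemma ev0 g v : eval v (App (cg g) (@F0 g)) = g e0.
Proof.
have E0 : forall h : 'I_0 -> bool, h = e0 by move=> h; apply: functional_extensionality; case.
by rewrite /=; congr g; apply: E0.
Qed.

Definition empF : formula classical_sem -> Prop := fun _ => False.

Lemma lhs1 g : entails [set true] [set true] (setU1f empF (App (cg g) (@F0 g))) empF <-> g e0 = false.
Proof.
split.
- move=> L; case Hb: (g e0) => //.
  have [d [[] ]] := L (fun _ => true) (fun d Hd => match Hd with
     | or_introl f => False_ind _ f
     | or_intror e => eq_ind_r (fun z => eval _ z \in [set true]) (etrans (f_equal (fun b => b \in [set true]) (etrans (ev0 g (fun _ => true)) Hb)) (in_set1 true true)) e end).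
- move=> Hb v Hv; have := Hv _ (or_intror erefl); by rewrite ev0 Hb inE.
Qed.

Lemma lhs2 g : entails [set true] [set true] empF (setU1f empF (App (cg g) (@F0 g))) <-> g e0 = true.
Proof.
split.
- move=> L; have [d [[[]|->]]] := L (fun _ => true) (fun d (f : False) => False_ind _ f).
  by rewrite ev0 inE => /eqP.
- move=> Hb v _; exists (App (cg g) (@F0 g)); split; [by right | by rewrite ev0 Hb inE].
Qed.

Lemma emp_not g : ~ entails [set true] [set true]
   (setUp empF (img_idx (@F0 g) set0)) (setUp (img_idx (@F0 g) set0) empF).
Proof.
move=> L.
have HG : forall d, setUp empF (img_idx (@F0 g) set0) d -> eval (fun _ => true) d \in [set true].
  by move=> d [[]|[i]]; rewrite inE.
have [d [[[i]|[]] _]] := L (fun _ => true) HG.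
by case: i.
Qed.

Lemma nocl1 (g : ('I_0 -> bool) -> bool) :
  ~ classical_sat g ([set (set0, set0)], [set (set0, set0)]).
Proof.
move=> H; have [[H1a _] [H2a _]] := H empF empF (@F0 g).
case Hb: (g e0).
- by apply: (@emp_not g); apply: (H2a (proj2 (lhs2 g) Hb) (set0, set0)); rewrite inE.
- by apply: (@emp_not g); apply: (H1a (proj2 (lhs1 g) Hb) (set0, set0)); rewrite inE.
Qed.

Lemma nocl2 (g : ('I_0 -> bool) -> bool) : ~ classical_sat g (set0, set0).
Proof.
move=> H; have [[_ H1b] [_ H2b]] := H empF empF (@F0 g).
have := proj1 (lhs1 g) (H1b (fun B HB => ltac:(by rewrite inE in HB))).
by rewrite (proj1 (lhs2 g) (H2b (fun B HB => ltac:(by rewrite inE in HB)))).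
Qed.

Lemma fg_ok (V : finType) (one zero : V) (Dp Dc : {set V}) n (g : ('I_n -> bool) -> bool)
  (x : 'I_n -> V) : one \in Dp -> one \in Dc -> zero \notin Dp -> zero \notin Dc ->
  (fg one Dp Dc g x \in Dp) = [exists B in (Rg g).1, mt Dp Dc x B] /\
  (fg one Dp Dc g x \notin Dc) = [exists B in (Rg g).2, mt Dp Dc x B].
Proof.
move=> hp1 hc1 hp0 hc0; rewrite /fg.
case: pickP => [w /andP [/eqP h1 /eqP h2] | H] //=.
have [w Hw] := combo g x hp1 hc1 hp0 hc0.
by move: (H w); rewrite Hw.
Qed.

Theorem theorem6p3 (V : finType) (one zero : V) (Dp Dc : {set V}) (S : sem V)
  (h10 : one != zero)
  (hp1 : one \in Dp) (hc1 : one \in Dc)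
  (hp0 : zero \notin Dp) (hc0 : zero \notin Dc)
  (hmixed : Dp != Dc)
  (hce : const_expressive S) :
  (exists (n : nat) (f : ('I_n -> V) -> V) (R : rule n),
      @regular V (ext S f) Dp Dc None R /\
      forall g : ('I_n -> bool) -> bool, ~ classical_sat g R)
  /\
  (forall (n : nat) (g : ('I_n -> bool) -> bool),
      exists (f : ('I_n -> V) -> V) (R : rule n),
        @regular V (ext S f) Dp Dc None R /\ classical_sat g R).
Proof.
split.
- case: (boolP [exists w, (w \in Dp) && (w \notin Dc)]) => [/existsP [w /andP [h1 h2]] | Hn].
  + exists 0, (fun _ => w), ([set (set0, set0)], [set (set0, set0)]); split; last exact: nocl1.
    have Hm : forall x : 'I_0 -> V, [exists B in [set (set0, set0)], mt Dp Dc x B].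
      move=> x; apply/existsP; exists (set0, set0); rewrite inE eqxx /=.
      by apply/forallP; case.
    by apply: L1 => x /=; rewrite Hm.
  + have [w Hw] := set_diff_ex hmixed.
    have [h1 h2] : w \notin Dp /\ w \in Dc.
      move/existsPn: Hn => /(_ w); move: Hw.
      by case: (w \in Dp); case: (w \in Dc).
    exists 0, (fun _ => w), (set0, set0); split; last exact: nocl2.
    have Hm : forall x : 'I_0 -> V, [exists B in set0, mt Dp Dc x B] = false.
      by move=> x; apply/existsP => -[B]; rewrite inE.
    by apply: L1 => x /=; rewrite Hm ?h2 ?(negbTE h1).
- move=> n g; exists (fg one Dp Dc g), (Rg g); split; last exact: class_sat.
  by apply: L1 => x /=; case: (fg_ok g x hp1 hc1 hp0 hc0).
Qed.
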